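(* Let $\Omega\subset\mathbb{R}^3$ be a bounded domain with $C^2$ boundary satisfying the uniform circumscribed sphere condition with radius $R$. Then $$d_x^{1/2}\le R^{1/2}N(x,v)$$ for all $x\in\bar\Omega$ and $v\in\mathbb{R}^3\setminus\{0\}$, where $d_x$ is the distance from $x$ to $\partial\Omega$.
   Context: $n$ is the outward unit normal on $\partial\Omega$; $\tau_{x,v}=\inf\{s\ge0:x-sv\in\Omega^c\}$, $q(x,v)=x-\tau_{x,v}v$, $N(x,v)=-n(q(x,v))\cdot\frac{v}{|v|}$. Uniform circumscribed sphere condition with radius $R$: every $x\in\partial\Omega$ lies on $\partial B_R$ for some ball $B_R$ of radius $R$ with $\bar\Omega\subset\bar B_R$. *)

(* Defs.v *)
(* R : realType, points of R^3 are row vectors 'rV[R]_3.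
   The library norm on 'rV is the max norm, so the Euclidean norm, inner product,
   Euclidean balls and distances are defined explicitly below. *)
From HB Require Import structures.
From mathcomp Require Import all_boot all_order all_algebra.
From mathcomp Require Import all_classical all_reals all_analysis.
Set Implicit Arguments. Unset Strict Implicit. Unset Printing Implicit Defensive.
Import Order.TTheory GRing.Theory Num.Theory.
Import numFieldNormedType.Exports.
Local Open Scope classical_set_scope.
Local Open Scope ring_scope.

Section Defs.
Variable R : realType.
Local Notation V := 'rV[R]_3.

Definition dotp (u v : V) : R := \sum_(i < 3) u 0 i * v 0 i.
Definition enorm (u : V) : R := Num.sqrt (dotp u u).

Definition eball (p : V) (r : R) : set V := [set y | enorm (y - p) < r].

Definition ebasis (i : 'I_3) : V := delta_mx 0 i.

Definition partial (i : 'I_3) (f : V -> R) : V -> R := fun x => 'D_(ebasis i) f x.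

Definition C2_on (U : set V) (f : V -> R) : Prop :=
  open U /\
  {in U, continuous f} /\
  (forall i : 'I_3, forall x, U x -> derivable f x (ebasis i)) /\
  (forall i : 'I_3, {in U, continuous (partial i f)}) /\
  (forall i j : 'I_3, forall x, U x -> derivable (partial i f) x (ebasis j)) /\
  (forall i j : 'I_3, {in U, continuous (partial j (partial i f))}).

Definition grad (f : V -> R) (x : V) : V := \row_(i < 3) partial i f x.

Definition bdry (O : set V) : set V := closure O `\` interior O.

Definition local_defining_fun (O : set V) (p : V) (r : R) (rho : V -> R) : Prop :=
  0 < r /\ C2_on (eball p r) rho /\
  (forall y, eball p r y -> (O y <-> rho y < 0)) /\
  grad rho p != 0.

Definition C2_boundary (O : set V) : Prop :=
  forall p, bdry O p -> exists r (rho : V -> R), local_defining_fun O p r rho.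

Definition outward_unit_normal (O : set V) (n : V -> V) : Prop :=
  forall p, bdry O p -> exists r (rho : V -> R),
    local_defining_fun O p r rho /\ n p = (enorm (grad rho p))^-1 *: grad rho p.

Definition bounded_domain (O : set V) : Prop :=
  O !=set0 /\ open O /\ connected O /\ exists M : R, forall x, O x -> enorm x <= M.

Definition unif_circumscribed_sphere (O : set V) (Rad : R) : Prop :=
  forall x, bdry O x -> exists c : V,
    enorm (x - c) = Rad /\ (forall y, closure O y -> enorm (y - c) <= Rad).

Definition tau (O : set V) (x v : V) : R :=
  inf [set s : R | 0 < s /\ ~ O (x - s *: v)].

Definition qpt (O : set V) (x v : V) : V := x - tau O x v *: v.

Definition Nfun (O : set V) (n : V -> V) (x v : V) : R :=
  - dotp (n (qpt O x v)) ((enorm v)^-1 *: v).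

Definition dist_bdry (O : set V) (x : V) : R :=
  inf [set d : R | exists y, bdry O y /\ d = enorm (x - y)].

End Defs.

(* Main.v *)
Require Import Defs.
From HB Require Import structures.
From mathcomp Require Import all_boot all_order all_algebra.
From mathcomp Require Import all_classical all_reals all_analysis.
From mathcomp Require Import ring lra.
Import Order.TTheory GRing.Theory Num.Theory.
Import numFieldNormedType.Exports.
Local Open Scope classical_set_scope.
Local Open Scope ring_scope.

Section Aux.
Variable R : realType.
Local Notation V := 'rV[R]_3.
Implicit Types (u v w : V).

Lemma dotpC u v : dotp u v = dotp v u.
Proof. by apply: eq_bigr => i _; rewrite mulrC. Qed.

Lemma dotpDl u w v : dotp (u + w) v = dotp u v + dotp w v.
Proof. by rewrite /dotp -big_split; apply: eq_bigr => i _; rewrite mxE mulrDl. Qed.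

Lemma dotpZl (a : R) u v : dotp (a *: u) v = a * dotp u v.
Proof. by rewrite /dotp mulr_sumr; apply: eq_bigr => i _; rewrite mxE mulrA. Qed.

Lemma dotpNl u v : dotp (- u) v = - dotp u v.
Proof. by rewrite -scaleN1r dotpZl mulN1r. Qed.

Lemma dotpBl u w v : dotp (u - w) v = dotp u v - dotp w v.
Proof. by rewrite dotpDl dotpNl. Qed.

Lemma dotpDr u w v : dotp v (u + w) = dotp v u + dotp v w.
Proof. by rewrite dotpC dotpDl !(dotpC v). Qed.

Lemma dotpZr (a : R) u v : dotp v (a *: u) = a * dotp v u.
Proof. by rewrite dotpC dotpZl dotpC. Qed.

Lemma dotpBr u w v : dotp v (u - w) = dotp v u - dotp v w.
Proof. by rewrite dotpC dotpBl !(dotpC v). Qed.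

Lemma dotpNr u v : dotp v (- u) = - dotp v u.
Proof. by rewrite dotpC dotpNl dotpC. Qed.

Lemma dotp0l v : dotp 0 v = 0.
Proof. by rewrite /dotp big1 // => i _; rewrite mxE mul0r. Qed.

Lemma dotp_ge0 u : 0 <= dotp u u.
Proof. by apply: sumr_ge0 => i _; rewrite -expr2 sqr_ge0. Qed.

Lemma dotp_eq0 u : dotp u u = 0 -> u = 0.
Proof.
move=> /eqP; rewrite psumr_eq0; last by move=> i _; rewrite -expr2 sqr_ge0.
move=> /allP H; apply/rowP => i; rewrite mxE.
have /H : i \in index_enum 'I_3 by rewrite mem_index_enum.
by rewrite /= -expr2 sqrf_eq0 => /eqP.
Qed.

Lemma coord_le u i : (u 0 i) ^+ 2 <= dotp u u.
Proof.
rewrite /dotp (bigD1 i) //= -expr2 lerDl.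
by apply: sumr_ge0 => j _; rewrite -expr2 sqr_ge0.
Qed.

Lemma enorm_ge0 u : 0 <= enorm u.
Proof. exact: sqrtr_ge0. Qed.

Lemma enorm_sq u : enorm u ^+ 2 = dotp u u.
Proof. by rewrite sqr_sqrtr // dotp_ge0. Qed.

Lemma enorm_eq0 u : enorm u = 0 -> u = 0.
Proof. by move=> H; apply: dotp_eq0; rewrite -enorm_sq H expr0n. Qed.

Lemma enorm0 : enorm (0 : V) = 0.
Proof. by rewrite /enorm dotp0l sqrtr0. Qed.

Lemma enormZ (a : R) u : enorm (a *: u) = `|a| * enorm u.
Proof.
rewrite /enorm dotpZl dotpZr mulrA sqrtrM ?sqr_ge0 //.
by rewrite -expr2 sqrtr_sqr.
Qed.

Lemma enormN u : enorm (- u) = enorm u.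
Proof. by rewrite -scaleN1r enormZ normrN1 mul1r. Qed.

Lemma dotp_expand u w (s : R) :
  dotp (u + s *: w) (u + s *: w) = dotp u u + 2 * s * dotp u w + s ^+ 2 * dotp w w.
Proof.
rewrite !dotpDl !dotpDr !dotpZl !dotpZr (dotpC w u); lra.
Qed.

Lemma coord_enorm u i : `|u 0 i| <= enorm u.
Proof.
rewrite -sqrtr_sqr /enorm ler_sqrt ?coord_le //; exact: dotp_ge0.
Qed.

End Aux.

Section Aux2.
Variable R : realType.
Local Notation V := 'rV[R]_3.

Lemma near_ball_ex {K : numFieldType} {W : normedModType K} (x : W) (P : W -> Prop) :
  (\forall y \near x, P y) -> exists2 d, 0 < d & forall y, `|x - y| < d -> P y.
Proof.
rewrite -nbhs_normE => -[d d0 H]; exists d => // y Hy; exact: H.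
Qed.

Lemma slice_derive (f : V -> R) (y e : V) (t : R) :
  derivable f (y + t *: e) e ->
  is_derive t 1 (fun t => f (y + t *: e)) ('D_e f (y + t *: e)).
Proof.
move=> H.
have eq : (fun h : R => h^-1 *: (((fun t => f (y + t *: e)) \o shift t) (h *: 1)
              - f (y + t *: e))) =
          (fun h : R => h^-1 *: ((f \o shift (y + t *: e)) (h *: e) - f (y + t *: e))).
  apply: funext => h /=.
  congr (_ *: (f _ - _)); rewrite scalerDl.
  have -> : h%:A = h by rewrite /GRing.scale /= mulr1.
  by rewrite addrCA addrA.
apply: DeriveDef; first by rewrite /derivable eq.
by rewrite /derive eq.
Qed.

Lemma MVT0 (g dg : R -> R) (b : R) :
  (forall x : R, `|x| <= `|b| -> is_derive x (1 : R) g (dg x)) ->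
  exists c, `|c| <= `|b| /\ g b - g 0 = dg c * b.
Proof.
move=> H.
have Hd : forall x : R, `|x| <= `|b| -> derivable g x (1 : R).
  by move=> x /H [].
case: (leP 0 b) => b0.
  have [||c Hc E] := @MVT_segment R g dg 0 b b0.
  - move=> x; rewrite in_itv /= => /andP[x0 xb]; apply: H.
    by rewrite !ger0_norm //; lra.
  - apply: derivable_within_continuous => x; rewrite in_itv /= => /andP[x0 xb].
    by apply: Hd; rewrite !ger0_norm //; lra.
  - exists c; move: Hc; rewrite in_itv /= => /andP[c0 cb].
    by rewrite !ger0_norm // subr0 in E *; split.
have [||c Hc E] := @MVT_segment R g dg b 0 (ltW b0).
  - move=> x; rewrite in_itv /= => /andP[x0 xb]; apply: H.
    by rewrite !ltr0_norm //; lra.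
  - apply: derivable_within_continuous => x; rewrite in_itv /= => /andP[x0 xb].
    apply: Hd; rewrite (ltr0_norm b0).
    case: (leP 0 x) => x0'; [rewrite ger0_norm //| rewrite ltr0_norm //]; lra.
  - exists c; move: Hc; rewrite in_itv /= => /andP[c0 cb].
    split; last by rewrite add0r in E; lra.
    rewrite (ltr0_norm b0).
    case: (leP 0 c) => x0'; [rewrite ger0_norm //| rewrite ltr0_norm //]; lra.
Qed.


Lemma step_bound (p y e : V) (x b δ : R) :
  `|y - p| + `|b| * `|e| < δ -> `|x| <= `|b| -> `|y + x *: e - p| < δ.
Proof.
move=> H Hx; apply: le_lt_trans H.
rewrite addrAC; apply: le_trans (ler_normD _ _) _.
by rewrite lerD2l normrZ ler_wpM2r.
Qed.

Lemma step (f : V -> R) (p y e : V) (b δ ε : R) :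
  `|y - p| + `|b| * `|e| < δ ->
  (forall z, `|z - p| < δ -> derivable f z e /\ `|'D_e f z - 'D_e f p| <= ε) ->
  `|f (y + b *: e) - f y - b * 'D_e f p| <= `|b| * ε.
Proof.
move=> Hb Hz.
have [|c [Hc E]] := @MVT0 (fun t => f (y + t *: e)) (fun t => 'D_e f (y + t *: e)) b.
  move=> x Hx; apply: slice_derive; apply: (proj1 (Hz _ _)).
  exact: step_bound Hb Hx.
move: E => /=; rewrite scale0r addr0 => ->.
rewrite [b * _]mulrC -mulrBl normrM mulrC ler_wpM2l //.
by case: (Hz (y + c *: e) (@step_bound p y e c b δ Hb Hc)).
Qed.



Definition i0 : 'I_3 := @Ordinal 3 0 isT.
Definition i1 : 'I_3 := @Ordinal 3 1 isT.
Definition i2 : 'I_3 := @Ordinal 3 2 isT.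

Lemma sum3 (F : 'I_3 -> R) : \sum_i F i = F i0 + F i1 + F i2.
Proof. rewrite !big_ord_recl big_ord0 addr0 addrA. by congr (F _ + F _ + F _); apply/val_inj. Qed.

Lemma decomp (p w : V) (s : R) : p + s *: w =
  ((p + (s * w 0 i0) *: ebasis R i0) + (s * w 0 i1) *: ebasis R i1) + (s * w 0 i2) *: ebasis R i2.
Proof.
apply/rowP => j; rewrite !mxE /=.
case: j => [[|[|[|//]]] Hj]; rewrite /ebasis ?mxE /=.
- by rewrite (bool_irrelevance Hj (isT : (0 < 3)%N)) !mulr0 !addr0 mulr1.
- by rewrite (bool_irrelevance Hj (isT : (1 < 3)%N)) !mulr0 addr0 !mulr1 addr0.
- by rewrite (bool_irrelevance Hj (isT : (2 < 3)%N)) !mulr0 !addr0 !mulr1.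
Qed.

Lemma ord3 (i : 'I_3) : i = i0 \/ i = i1 \/ i = i2.
Proof.
case: i => [[|[|[|//]]] Hi].
- by left; apply/val_inj.
- by right; left; apply/val_inj.
- by right; right; apply/val_inj.
Qed.

Lemma dotp_grad (f : V -> R) p w :
  dotp (grad f p) w = w 0 i0 * 'D_(ebasis R i0) f p + w 0 i1 * 'D_(ebasis R i1) f p
     + w 0 i2 * 'D_(ebasis R i2) f p.
Proof. by rewrite /dotp sum3 /grad !mxE /partial !(mulrC (w 0 _)). Qed.

Lemma dir_est (f : V -> R) (p w : V) (δ0 : R) :
  0 < δ0 ->
  (forall z i, `|z - p| < δ0 -> derivable f z (ebasis R i)) ->
  (forall i, {for p, continuous (partial i f)}) ->
  forall ε, 0 < ε -> exists2 δ, 0 < δ & forall s, 0 < s -> s < δ ->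
    `|f (p + s *: w) - f p - s * dotp (grad f p) w| <= s * ε.
Proof.
move=> d0 Hd Hc e e0.
set W := `|w 0 i0| + `|w 0 i1| + `|w 0 i2|.
have W0 : 0 <= W by rewrite /W !addr_ge0.
set e' := e / (1 + W).
have e'0 : 0 < e' by rewrite /e' divr_gt0 //; lra.
have We' : W * e' <= e.
  rewrite /e' mulrA ler_pdivrMr; last lra.
  by rewrite mulrDr mulr1 mulrC lerDr ltW.
have cont i : exists2 d, 0 < d & forall z, `|z - p| < d ->
    `|partial i f z - partial i f p| <= e'.
  have := Hc i; move/cvgrPdist_lt => /(_ e' e'0) /near_ball_ex [d d0' H].
  exists d => // z Hz; rewrite distrC; apply/ltW/H; rewrite distrC //.
have [d1 d10 H1] := cont i0; have [d2 d20 H2] := cont i1; have [d3 d30 H3] := cont i2.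
set δ1 := Order.min δ0 (Order.min d1 (Order.min d2 d3)).
have δ10 : 0 < δ1 by rewrite /δ1 !lt_min d0 d10 d20 d30.
have Hz i z : `|z - p| < δ1 -> derivable f z (ebasis R i) /\
    `|'D_(ebasis R i) f z - 'D_(ebasis R i) f p| <= e'.
  rewrite /δ1 !lt_min => /and4P[z0 z1 z2 z3]; split; first exact: Hd.
  by case: (ord3 i) => [->|[->|->]]; [apply: H1|apply: H2|apply: H3].
set n0 := `|ebasis R i0|; set n1 := `|ebasis R i1|; set n2 := `|ebasis R i2|.
set K := `|w 0 i0| * n0 + `|w 0 i1| * n1 + `|w 0 i2| * n2.
have K0 : 0 <= K by rewrite /K /n0 /n1 /n2 !addr_ge0 ?mulr_ge0 ?normr_ge0.
exists (δ1 / (K + 1)); first by rewrite divr_gt0 //; lra.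
move=> s s0 sd.
have sK : s * K < δ1.
  move: sd; rewrite ltr_pdivlMr; last lra.
  move=> H; apply: le_lt_trans H; rewrite ler_wpM2l ?(ltW s0) // lerDl ler01 //.
rewrite (decomp p w s) dotp_grad.
set b0 := s * w 0 i0; set b1 := s * w 0 i1; set b2 := s * w 0 i2.
set p1 := p + b0 *: ebasis R i0; set p2 := p1 + b1 *: ebasis R i1.
have a0 : `|b0| = s * `|w 0 i0| by rewrite normrM gtr0_norm.
have a1 : `|b1| = s * `|w 0 i1| by rewrite normrM gtr0_norm.
have a2 : `|b2| = s * `|w 0 i2| by rewrite normrM gtr0_norm.
have sKe : s * K = `|b0| * n0 + `|b1| * n1 + `|b2| * n2.
  by rewrite a0 a1 a2 /K !mulrDr !mulrA.
have q0 : 0 <= `|b0| * n0 by rewrite /n0 mulr_ge0 ?normr_ge0.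
have q1 : 0 <= `|b1| * n1 by rewrite /n1 mulr_ge0 ?normr_ge0.
have q2 : 0 <= `|b2| * n2 by rewrite /n2 mulr_ge0 ?normr_ge0.
have P1 : `|p1 - p| = `|b0| * n0 by rewrite /p1 addrAC subrr add0r normrZ.
have P2 : `|p2 - p| <= `|b0| * n0 + `|b1| * n1.
  rewrite /p2 addrAC; apply: le_trans (ler_normD _ _) _.
  by rewrite P1 (normrZ b1).
have S0 := @step f p p (ebasis R i0) b0 δ1 e'.
have S1 := @step f p p1 (ebasis R i1) b1 δ1 e'.
have S2 := @step f p p2 (ebasis R i2) b2 δ1 e'.
rewrite subrr normr0 add0r -/n0 in S0.
rewrite -/n1 in S1. rewrite -/n2 in S2.
have {}S0 := S0 ltac:(lra) (Hz i0).
have {}S1 := S1 ltac:(rewrite P1; lra) (Hz i1).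
have {}S2 := S2 ltac:(lra) (Hz i2).
set D0 := 'D_(ebasis R i0) f p in S0 *; set D1 := 'D_(ebasis R i1) f p in S1 *;
set D2 := 'D_(ebasis R i2) f p in S2 *.
have -> : f (p2 + b2 *: ebasis R i2) - f p - s * (w 0 i0 * D0 + w 0 i1 * D1 + w 0 i2 * D2)
   = (f (p2 + b2 *: ebasis R i2) - f p2 - b2 * D2) + (f p2 - f p1 - b1 * D1)
     + (f p1 - f p - b0 * D0).
  rewrite /b0 /b1 /b2; ring.
apply: le_trans (ler_normD _ _) _; apply: le_trans (lerD (ler_normD _ _) (lexx _)) _.
apply: le_trans (lerD (lerD S2 S1) S0) _.
have E : `|b2| * e' + `|b1| * e' + `|b0| * e' = s * (W * e').
  rewrite a0 a1 a2 /W; ring.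
by rewrite E ler_wpM2l // ltW.
Qed.

End Aux2.

Section Aux3.
Variable R : realType.
Local Notation V := 'rV[R]_3.

Lemma dir_neg (f : V -> R) (p w : V) (δ0 : R) :
  0 < δ0 ->
  (forall z i, `|z - p| < δ0 -> derivable f z (ebasis R i)) ->
  (forall i, {for p, continuous (partial i f)}) ->
  dotp (grad f p) w < 0 ->
  exists2 δ, 0 < δ & forall s, 0 < s -> s < δ ->
     `|p + s *: w - p| < δ0 /\ f (p + s *: w) < f p.
Proof.
move=> d0 Hd Hc Hg.
set G := dotp (grad f p) w in Hg *.
have [δ δ0' H] := @dir_est R f p w δ0 d0 Hd Hc (- G / 2) ltac:(lra).
have w1 : 0 < `|w| + 1 by rewrite ltr_wpDl.
exists (Order.min δ (δ0 / (`|w| + 1))); first by rewrite lt_min δ0' divr_gt0.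
move=> s s0; rewrite lt_min => /andP[s1 s2]; split.
  rewrite addrAC subrr add0r normrZ gtr0_norm //.
  move: s2; rewrite ltr_pdivlMr // => H2; apply: le_lt_trans H2.
  by rewrite mulrDr mulr1 lerDl ltW.
have := H s s0 s1; rewrite -/G => /ler_normlP [_ H3].
have sG : s * G < 0 by rewrite pmulr_rlt0.
have E : s * (- G / 2) = - (s * G) / 2 by ring.
rewrite E in H3; lra.
Qed.


Section Exit.
Variables (O : set V) (x v : V).
Let T := [set s : R | 0 < s /\ ~ O (x - s *: v)].

Lemma T_ne : (exists M : R, forall y, O y -> enorm y <= M) -> v != 0 -> T !=set0.
Proof.
move=> [M HM] v0.
have [i vi] : exists i, v 0 i != 0.
  apply/existsP; apply: contraNT v0 => /existsPn H; apply/eqP/rowP => i.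
  rewrite mxE; apply/eqP/negbNE; exact: H.
have vi0 : 0 < `|v 0 i| by rewrite normr_gt0.
set s := (`|x 0 i| + `|M| + 1) / `|v 0 i|.
have s0 : 0 < s by rewrite divr_gt0 // ltr_wpDl // addr_ge0.
exists s; split => // Hin.
have H1 := HM _ Hin.
have H2 := @coord_enorm R (x - s *: v) i.
rewrite !mxE in H2.
have H3 := ler_normB (x 0 i) (x 0 i - s * v 0 i).
rewrite (_ : x 0 i - (x 0 i - s * v 0 i) = s * v 0 i) in H3; last by rewrite opprB addrC subrK.
rewrite normrM gtr0_norm // /s divfK ?gt_eqF // in H3.
have := ler_norm M; lra.
Qed.

Hypothesis Tn : T !=set0.

Lemma T_lb : has_lbound T.
Proof. by exists 0 => s [s0 _]; exact: ltW. Qed.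

Lemma tau_ge0 : 0 <= tau O x v.
Proof. rewrite /tau; apply: (@lb_le_inf R T 0 Tn) => s [s0 _]; exact: ltW. Qed.

Lemma tau_le s : 0 < s -> ~ O (x - s *: v) -> tau O x v <= s.
Proof. by move=> s0 Hs; rewrite /tau; apply: (ge_inf T_lb); split. Qed.

Lemma tau_in s : 0 < s -> s < tau O x v -> O (x - s *: v).
Proof.
move=> s0 st; apply/not_notP => Hn.
by have := tau_le _ s0 Hn; rewrite leNgt st.
Qed.

Lemma tau_gap e : 0 < e -> exists2 s, 0 < s /\ ~ O (x - s *: v) & s < tau O x v + e.
Proof.
move=> e0; apply: inf_lt Tn _; rewrite /tau; lra.
Qed.

Hypothesis Oopen : open O.

Lemma exit_bdry : closure O x -> bdry O (qpt O x v).
Proof.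
move=> Hx.
have Oint : O° = O by apply/interior_id.
set t := tau O x v.
have t0 := tau_ge0.
have v1 : 0 < `|v| + 1 by rewrite ltr_wpDl.
split; last first.
  rewrite Oint /qpt -/t => Hq.
  have : nbhs (x - t *: v) O by move: Hq; rewrite -{1}Oint.
  move/near_ball_ex => [d d0 Hd].
  have [s [s0 Hs] st] := tau_gap _ (divr_gt0 d0 v1).
  have ts : t <= s by apply: tau_le.
  case: (eqVneq s t) => [st'|st'].
    by apply: Hs; rewrite st'.
  apply: Hs; apply: Hd.
  have -> : x - t *: v - (x - s *: v) = (s - t) *: v.
    by apply/rowP => j; rewrite !mxE; ring.
  rewrite normrZ ger0_norm ?subr_ge0 //.
  have : s - t < d / (`|v| + 1) by lra.
  rewrite ltr_pdivlMr // => H; apply: le_lt_trans H.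
  by rewrite ler_wpM2l ?subr_ge0 // lerDl.
rewrite /qpt -/t.
case: (eqVneq t 0) => [->|tn0]; first by rewrite scale0r subr0.
have tp : 0 < t by rewrite lt_def tn0.
move=> B /near_ball_ex [d d0 Hd].
set m := Order.min t (d / (`|v| + 1)).
have m0 : 0 < m by rewrite lt_min tp divr_gt0.
have mt : m <= t by rewrite ge_min lexx.
have md : m <= d / (`|v| + 1) by rewrite ge_min lexx orbT.
set s := t - m / 2.
exists (x - s *: v); split.
  by apply: tau_in; rewrite /s; lra.
apply: Hd.
have -> : x - t *: v - (x - s *: v) = (s - t) *: v.
  by apply/rowP => j; rewrite !mxE; ring.
rewrite normrZ /s (_ : t - m / 2 - t = - (m / 2)); last by ring.
rewrite normrN ger0_norm; last lra.
have H : m / 2 * (`|v| + 1) < d.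
  move: md; rewrite ler_pdivlMr // => H; apply: lt_le_trans H.
  rewrite ltr_pM2r //; lra.
apply: le_lt_trans H; rewrite ler_wpM2l ?lerDl //; lra.
Qed.

Lemma tau0_small : tau O x v = 0 -> forall d, 0 < d -> exists2 s, 0 < s /\ ~ O (x - s *: v) & s < d.
Proof.
move=> t0 d d0; have [s Hs sd] := tau_gap _ d0; exists s => //; rewrite t0 add0r in sd; exact: sd.
Qed.

End Exit.

End Aux3.

Arguments T_ne {R O x v}.
Arguments tau_ge0 {R O x v}.
Arguments tau_le {R O x v}.
Arguments tau_in {R O x v}.
Arguments tau_gap {R O x v}.
Arguments exit_bdry {R O x v}.
Arguments tau0_small {R O x v}.
Arguments dir_neg {R f p w δ0}.
Arguments dotp_expand {R}.
Arguments coord_enorm {R}.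
Arguments enorm_ge0 {R}.
Arguments dotp_ge0 {R}.
Arguments dotp_eq0 {R}.
Arguments dotpC {R}.
Arguments dotpDl {R}.
Arguments dotpZl {R}.
Arguments dotpNl {R}.
Arguments dotpBl {R}.
Arguments dotpDr {R}.
Arguments dotpZr {R}.
Arguments dotpBr {R}.
Arguments dotpNr {R}.
Arguments enormZ {R}.
Arguments enormN {R}.
Arguments enorm_eq0 {R}.
Arguments enorm_sq {R}.

Section Aux4.
Variable R : realType.
Local Notation V := 'rV[R]_3.

Lemma ball_nbhs (p : V) (d : R) (P : V -> Prop) :
  0 < d -> (forall y, `|p - y| < d -> P y) -> nbhs p P.
Proof. by move=> d0 H; apply: (proj2 (nbhs_normP p P)); exists d. Qed.

Lemma e0_coord : ebasis R i0 0 i0 = 1.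
Proof. by rewrite /ebasis mxE !eqxx. Qed.

Lemma enorm_e0 : enorm (ebasis R i0) = 1.
Proof.
rewrite /enorm /dotp sum3 /ebasis !mxE /= !mulr0 !addr0 mulr1 sqrtr1 //.
Qed.

Lemma vec_eq1 (x v : V) (s : R) : x - (x - s *: v) = s *: v.
Proof. by apply/rowP => j; rewrite !mxE; ring. Qed.

Lemma rad_pos (O : set V) (c : V) (Rad : R) :
  open O -> O !=set0 -> (forall y, closure O y -> enorm (y - c) <= Rad) -> 0 < Rad.
Proof.
move=> Oo [y0 Oy0] Hc.
rewrite ltNge; apply/negP => R0.
have Hy : forall y, O y -> y = c.
  move=> y Oy; have := Hc _ (subset_closure Oy) => H.
  have : enorm (y - c) = 0 by apply/eqP; rewrite eq_le enorm_ge0 (le_trans H R0).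
  by move/enorm_eq0/eqP; rewrite subr_eq0 => /eqP.
have : nbhs y0 O by rewrite openE in Oo; exact: Oo.
move/near_ball_ex => [d d0 Hd].
set t := d / (`|ebasis R i0| + 1).
have n1 : 0 < `|ebasis R i0| + 1 by rewrite ltr_wpDl.
have t0 : 0 < t by rewrite divr_gt0.
have : O (y0 + t *: ebasis R i0).
  apply: Hd; rewrite opprD addrA subrr add0r normrN normrZ gtr0_norm //.
  by rewrite /t mulrAC ltr_pdivrMr // ltr_pM2l // ltrDl ltr01.
move/Hy; rewrite (Hy _ Oy0) => /(congr1 (fun z : V => z - c)).
rewrite subrr addrAC subrr add0r => /(congr1 (fun z : V => z 0 i0)).
rewrite !mxE eqxx /= mulr1 => H; move: t0; rewrite -H ltxx //.
Qed.


Lemma dist_le (O : set V) (x c : V) (Rad : R) :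
  open O -> (exists M : R, forall y, O y -> enorm y <= M) -> closure O x ->
  (forall y, closure O y -> enorm (y - c) <= Rad) ->
  dist_bdry O x <= Rad - enorm (x - c).
Proof.
move=> Oo HM Hx Hc.
set e := enorm (x - c).
have eR : e <= Rad := Hc _ Hx.
pose u : V := if x == c then ebasis R i0 else e^-1 *: (x - c).
have [u1 xu] : enorm u = 1 /\ x - c = e *: u.
  rewrite /u; case: eqVneq => [xc|xc].
    by rewrite enorm_e0 /e xc subrr enorm0 scale0r.
  have e0 : 0 < e.
    rewrite /e lt_def enorm_ge0 andbT; apply/eqP => /enorm_eq0/eqP.
    by rewrite subr_eq0; apply/negP.
  rewrite enormZ -/e gtr0_norm ?invr_gt0 // mulVf ?gt_eqF //.
  by rewrite scalerA mulfV ?gt_eqF // scale1r.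
have v0 : - u != 0.
  by apply/negP => /eqP H; move: u1; rewrite -enormN H enorm0 => /eqP; rewrite eq_sym oner_eq0.
have Tn := T_ne (x:=x) HM v0.
have Hb := exit_bdry Tn Oo Hx.
have t0 := tau_ge0 Tn.
set t := tau O x (- u) in Hb t0 *.
have tl : t <= Rad - e.
  rewrite leNgt; apply/negP => H.
  set s := (Rad - e + t) / 2.
  have Os : O (x - s *: - u) by apply: tau_in => //; rewrite /s; lra.
  have := Hc _ (subset_closure Os).
  have -> : x - s *: - u - c = (e + s) *: u.
    by rewrite scalerN opprK addrAC xu scalerDl.
  have e0 : 0 <= e by exact: enorm_ge0.
  rewrite enormZ u1 mulr1 ger0_norm; rewrite /s; lra.
have Hd : dist_bdry O x <= enorm (x - qpt O x (- u)).
  rewrite /dist_bdry; apply: ge_inf.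
    by exists 0 => z [y [_ ->]]; exact: enorm_ge0.
  by exists (qpt O x (- u)).
apply: le_trans Hd _.
by rewrite /qpt -/t vec_eq1 enormZ enormN u1 mulr1 ger0_norm.
Qed.

End Aux4.

Arguments rad_pos {R O c Rad}.
Arguments dist_le {R O x c Rad}.
Arguments ball_nbhs {R p d P}.

Theorem proposition2p8 (R : realType) (Omega : set 'rV[R]_3) (n : 'rV[R]_3 -> 'rV[R]_3)
  (Rad : R) :
  bounded_domain Omega ->
  C2_boundary Omega ->
  outward_unit_normal Omega n ->
  unif_circumscribed_sphere Omega Rad ->
  forall x v : 'rV[R]_3, closure Omega x -> v != 0 ->
    Num.sqrt (dist_bdry Omega x) <= Num.sqrt Rad * Nfun Omega n x v.
Proof.
move=> [One [Oopen [_ HM]]] _ Hn Hsph x v Hx v0.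
have Tn := T_ne (x:=x) HM v0.
have Hq := exit_bdry Tn Oopen Hx.
have t0 := tau_ge0 Tn.
set τ := tau Omega x v in t0 *.
set q := qpt Omega x v in Hq.
have [c [Hc1 Hc2]] := Hsph q Hq.
have Rp : 0 < Rad := rad_pos Oopen One Hc2.
have [r [ρ [[r0 [[Uopen [ρc [ρd [pc _]]]] [Hch Hg]]] Hnq]]] := Hn q Hq.
have qU : eball q r q by rewrite /eball /= subrr enorm0.
have [δ0 δ00 HU] : exists2 δ0, 0 < δ0 & forall z, `|z - q| < δ0 -> eball q r z.
  have : nbhs q (eball q r) by rewrite openE in Uopen; exact: Uopen.
  move/near_ball_ex => [d d0 H]; exists d => // z Hz; apply: H; rewrite distrC //.
have Hd : forall z i, `|z - q| < δ0 -> derivable ρ z (ebasis R i).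
  by move=> z i H; apply: ρd; apply: HU.
have Hc : forall i, {for q, continuous (partial i ρ)}.
  by move=> i; apply: pc; rewrite inE.
have Oint : Omega° = Omega by apply/interior_id.
have qO : ~ Omega q by case: Hq => _; rewrite Oint.
have ρq0 : 0 <= ρ q.
  by rewrite leNgt; apply/negP => H; apply: qO; apply/(Hch q qU).2.
have ρq1 : ρ q <= 0.
  rewrite leNgt; apply/negP => H.
  have := ρc q; rewrite inE => /(_ qU) /cvgrPdist_lt /(_ _ H) /near_ball_ex [d1 d10 H1].
  have := Hq.1 [set y | `|q - y| < Order.min d1 δ0].
  case.
    apply: (ball_nbhs (d := Order.min d1 δ0)); first by rewrite lt_min d10 δ00.
    by [].
  move=> y [Oy]; rewrite /= lt_min => /andP[y1 y2].
  have := H1 _ y1 => Hy.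
  have : ρ y < 0 by apply/(Hch y _).1 => //; apply: HU; rewrite distrC.
  move/ltr_normlP: Hy => [_ Hy]; lra.
set a := q - c.
set g := grad ρ q.
have Ra : dotp a a = Rad ^+ 2 by rewrite -enorm_sq Hc1.
have Rad2 : 0 < Rad ^+ 2 by rewrite exprn_gt0.
have HD : forall w, 0 < dotp a w -> 0 <= dotp g w.
  move=> w aw; rewrite leNgt; apply/negP => gw.
  have [δ δp H] := dir_neg δ00 Hd Hc gw.
  have [H1 H2] := H (δ / 2) ltac:(lra) ltac:(lra).
  have Oin : Omega (q + δ / 2 *: w) by apply/(Hch _ (HU _ H1)).2; lra.
  have := Hc2 _ (subset_closure Oin).
  rewrite (_ : q + δ / 2 *: w - c = a + δ / 2 *: w); last by rewrite /a addrAC.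
  move=> Hle.
  have := ler_pM (enorm_ge0 _) (enorm_ge0 _) Hle Hle.
  rewrite -!expr2 enorm_sq dotp_expand Ra.
  have := dotp_ge0 w.
  have : 0 < δ / 2 * dotp a w by rewrite mulr_gt0 // divr_gt0.
  have : 0 <= (δ / 2) ^+ 2 * dotp w w by rewrite mulr_ge0 ?sqr_ge0 ?dotp_ge0.
  set A := δ / 2 * dotp a w; set B := (δ / 2) ^+ 2 * dotp w w.
  have -> : 2 * (δ / 2) * dotp a w = 2 * A by rewrite /A; ring.
  lra.
have ga0 : 0 <= dotp g a by apply: HD; rewrite Ra.
have L : forall u, dotp a u = 0 -> 0 <= dotp g u.
  move=> u au; rewrite leNgt; apply/negP => gu.
  set k := - dotp g u.
  have k0 : 0 < k by rewrite /k oppr_gt0.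
  set ε := k / (2 * (dotp g a + 1)).
  have ε0 : 0 < ε by rewrite divr_gt0 // mulr_gt0 //; lra.
  have Eε : ε * dotp g a + ε = k / 2.
    rewrite /ε; field; lra.
  have := HD (ε *: a + u).
  rewrite dotpDr dotpZr au addr0 Ra dotpDr dotpZr.
  have : 0 < ε * Rad ^+ 2 by rewrite mulr_gt0.
  have gk : dotp g u = - k by rewrite /k opprK.
  move=> H1 /(_ H1); rewrite gk; lra.
have Hperp : forall u, dotp a u = 0 -> dotp g u = 0.
  move=> u au; apply/eqP; rewrite eq_le L // andbT.
  by rewrite -oppr_ge0 -dotpNr L // dotpNr au oppr0.
set λ := dotp g a / Rad ^+ 2.
have gλ : g = λ *: a.
  set u := g - λ *: a.
  have au : dotp a u = 0.
    rewrite /u dotpBr dotpZr Ra (dotpC a g) /λ; field; lra.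
  have gu := Hperp u au.
  have : dotp u u = 0.
    by rewrite {1}/u dotpBl dotpZl au gu mulr0 subr0.
  by move/dotp_eq0/eqP; rewrite subr_eq0 => /eqP.
have λ0 : 0 < λ.
  rewrite lt_def divr_ge0 ?sqr_ge0 // andbT; apply/eqP => H.
  by move: Hg; rewrite -/g gλ H scale0r eqxx.
have nq : n q = Rad^-1 *: a.
  rewrite Hnq -/g gλ enormZ Hc1 gtr0_norm // scalerA.
  congr (_ *: _); rewrite invfM mulrAC mulVf ?gt_eqF // mul1r //.
have m0 : 0 < enorm v.
  rewrite lt_def enorm_ge0 andbT; apply/eqP => /enorm_eq0 H.
  by move: v0; rewrite H eqxx.
set m := enorm v in m0.
set K := dotp a v.
set N := Nfun Omega n x v.
have hN : N = - (K / (Rad * m)).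
  rewrite /N /Nfun -/q nq dotpZl dotpZr -/K invfM; ring.
have hxc : x - c = a + τ *: v.
  by rewrite /a /q /qpt -/τ; apply/rowP => j; rewrite !mxE; ring.
set e := enorm (x - c).
have e0 : 0 <= e by exact: enorm_ge0.
have eR : e <= Rad := Hc2 x Hx.
have he : e ^+ 2 = Rad ^+ 2 + 2 * τ * K + τ ^+ 2 * m ^+ 2.
  by rewrite /e enorm_sq hxc dotp_expand Ra /m enorm_sq.
have dl : dist_bdry Omega x <= Rad - e := dist_le Oopen HM Hx Hc2.
have K0 : K <= 0.
  case: (eqVneq τ 0) => [τ0|τn0].
    rewrite leNgt; apply/negP => Kp.
    have gv : dotp g (- v) < 0.
      by rewrite dotpNr gλ dotpZl -/K oppr_lt0 mulr_gt0.
    have [δ δp H] := dir_neg δ00 Hd Hc gv.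
    have [s [s0 sn] sd] := tau0_small Tn τ0 δ δp.
    have [H1 H2] := H s s0 sd.
    apply: sn.
    have xq : q = x by rewrite /q /qpt -/τ τ0 scale0r subr0.
    have : Omega (q + s *: - v) by apply/(Hch _ (HU _ H1)).2; lra.
    by rewrite xq scalerN.
  have tp : 0 < τ by rewrite lt_def τn0.
  have ee : e ^+ 2 <= Rad ^+ 2 by rewrite !expr2; exact: (ler_pM e0 e0 eR eR).
  have : 0 <= τ ^+ 2 * m ^+ 2 by rewrite mulr_ge0 ?sqr_ge0.
  have : 2 * τ * K = 2 * (τ * K) by ring.
  move=> E1 E2; have : τ * K <= 0 by lra.
  by rewrite pmulr_rle0.
have Rm : 0 < Rad * m by rewrite mulr_gt0.
have N0 : 0 <= N.
  by rewrite hN oppr_ge0 pmulr_lle0 // invr_gt0.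
have hK : K = - (N * Rad * m).
  by rewrite hN; field; rewrite !gt_eqF.
have he2 : e ^+ 2 - Rad ^+ 2 * (1 - N ^+ 2) = (τ * m - N * Rad) ^+ 2.
  by rewrite he hK; ring.
have he3 : Rad * (1 - N ^+ 2) <= e.
  case: (lerP (1 - N ^+ 2) 0) => h.
    by apply: le_trans e0; rewrite pmulr_rle0.
  have h1 : 1 - N ^+ 2 <= 1 by have := sqr_ge0 N; lra.
  rewrite leNgt; apply/negP => H.
  have H2 := ltr_pM e0 e0 H H.
  have H3 : Rad * (1 - N ^+ 2) * (Rad * (1 - N ^+ 2))
      = Rad ^+ 2 * ((1 - N ^+ 2) * (1 - N ^+ 2)) by ring.
  have H4 : (1 - N ^+ 2) * (1 - N ^+ 2) <= 1 * (1 - N ^+ 2) by rewrite ler_wpM2r // ltW.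
  have H5 := ler_wpM2l (ltW Rad2) H4.
  have H6 := sqr_ge0 (τ * m - N * Rad).
  rewrite mul1r in H5; rewrite -expr2 in H2; rewrite H3 in H2.
  move: H2 H5 H6; rewrite -he2.
  set P := Rad ^+ 2 * ((1 - N ^+ 2) * (1 - N ^+ 2)).
  set Q := Rad ^+ 2 * (1 - N ^+ 2).
  lra.
have dfin : dist_bdry Omega x <= Rad * N ^+ 2.
  have : Rad * (1 - N ^+ 2) = Rad - Rad * N ^+ 2 by ring.
  lra.
apply: le_trans (_ : Num.sqrt (dist_bdry Omega x) <= Num.sqrt (Rad * N ^+ 2)) _.
  by rewrite ler_sqrt // mulr_ge0 ?sqr_ge0 // ltW.
by rewrite sqrtrM; [rewrite sqrtr_sqr ger0_norm | exact: ltW].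
Qed.
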